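(* Let $\alpha,\beta,\gamma\in\mathbb R$ with $\gamma>0$ and $\alpha\beta>0$. Then $z\mapsto F(\alpha,\beta;\gamma;z)-1$ is strictly increasing on $[0,1)$.
   Context: $F(\alpha,\beta;\gamma;z)=\sum_{n=0}^{\infty}\frac{(\alpha)_n(\beta)_n}{(\gamma)_n\,n!}z^n$ for $|z|<1$ is the Gauss hypergeometric function, where $(x)_n=x(x+1)\cdots(x+n-1)$ and $(x)_0=1$ (defined for $\gamma\notin\mathbb Z_{\le0}$). *)

(* Defs.v *)
From mathcomp Require Import all_boot all_order all_algebra.
From mathcomp Require Import all_classical all_reals topology normedtype sequences.
Set Implicit Arguments. Unset Strict Implicit. Unset Printing Implicit Defensive.
Import Order.TTheory GRing.Theory Num.Theory numFieldNormedType.Exports.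
Local Open Scope ring_scope.

Definition pochhammer {R : pzRingType} (x : R) (n : nat) : R :=
  \prod_(i < n) (x + i%:R).

Definition hyp_term {R : fieldType} (a b c z : R) (n : nat) : R :=
  pochhammer a n * pochhammer b n / (pochhammer c n * n`!%:R) * z ^+ n.

(* F(a,b;c;z) = sum_{n>=0} hyp_term n, defined as the limit of partial sums
   (the series converges for |z| < 1 when c is not a nonpositive integer). *)
Definition hyp2F1 {R : realType} (a b c z : R) : R :=
  limn (series (hyp_term a b c z)).

(* Main.v *)
Require Import Defs.
From mathcomp Require Import all_boot all_order all_algebra.
From mathcomp Require Import all_classical all_reals topology normedtype sequences.
From mathcomp Require Import derive exp realfun.
From mathcomp Require Import ring lra.
Import Order.TTheory GRing.Theory Num.Theory.
Local Open Scope ring_scope.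
Set Implicit Arguments. Unset Strict Implicit.
Import numFieldNormedType.Exports.

Section S.
Variable R : realType.

Lemma ratio_test (u : R^nat) (r : R) (N : nat) : 0 < r -> r < 1 ->
  (forall n, (N <= n)%N -> `|u n.+1| <= r * `|u n|) -> cvgn (series u).
Proof.
move=> r0 r1 hr.
pose K := \sum_(i < N.+1) `|u i| / r ^+ i.
have K1 : forall n, (n <= N)%N -> `|u n| <= K * r ^+ n.
  move=> n nN.
  have -> : `|u n| = (`|u n| / r ^+ n) * r ^+ n by rewrite divfK // expf_neq0 // gt_eqF.
  apply: ler_wpM2r; first by rewrite exprn_ge0 // ltW.
  rewrite /K (bigD1 (Ordinal (nN : (n < N.+1)%N))) //= lerDl.
  by apply: sumr_ge0 => i _; rewrite divr_ge0 // exprn_ge0 // ltW.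
have K2 : forall n, `|u n| <= K * r ^+ n.
  elim=> [|n IH]; first exact: K1.
  case: (leqP n.+1 N) => [h|h]; first exact: K1.
  apply: le_trans (hr n _) _; first by rewrite -ltnS.
  by rewrite exprS mulrCA; apply: ler_wpM2l => //; exact: ltW.
have K0 : 0 <= K by apply: sumr_ge0 => i _; rewrite divr_ge0 // exprn_ge0 // ltW.
apply: (@normed_cvg R R u).
rewrite /normed_series_of /=. apply: (@series_le_cvg _ _ (geometric K r)).
- by move=> n; rewrite normr_ge0.
- by move=> n /=; rewrite mulr_ge0 // exprn_ge0 // ltW.
- by move=> n /=; exact: K2.
- by apply: is_cvg_geometric_series; rewrite gtr0_norm.
Qed.

Lemma poch_Sr (x : R) n : pochhammer x n.+1 = pochhammer x n * (x + n%:R).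
Proof. by rewrite /pochhammer big_ord_recr. Qed.

Lemma poch_Sl (x : R) n : pochhammer x n.+1 = x * pochhammer (x + 1) n.
Proof.
rewrite /pochhammer big_ord_recl; congr (_ * _); first by rewrite /= addr0.
by apply: eq_bigr => i _; rewrite lift0 -natr1; ring.
Qed.

Lemma poch_gt0 (x : R) n : 0 < x -> 0 < pochhammer x n.
Proof.
move=> x0; apply: prodr_gt0 => i _; exact: ltr_wpDr.
Qed.

Lemma poch_ge0 (x : R) n : 0 <= x -> 0 <= pochhammer x n.
Proof.
move=> x0; apply: prodr_ge0 => i _; exact: addr_ge0.
Qed.

Implicit Types A B C t : R.
Definition coef (A B C : R) n :=
  pochhammer A n * pochhammer B n / (pochhammer C n * n`!%:R).

Lemma hyp_termE A B C t n : hyp_term A B C t n = coef A B C n * t ^+ n.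
Proof. by []. Qed.

Lemma hyp_term_sym A B C t : hyp_term A B C t = hyp_term B A C t.
Proof. by apply/funext => n; rewrite /hyp_term [pochhammer A n * _]mulrC. Qed.

Lemma hyp_term_S A B C t n : 0 < C ->
  hyp_term A B C t n.+1 =
  hyp_term A B C t n * ((A + n%:R) * (B + n%:R) * t / ((C + n%:R) * n.+1%:R)).
Proof.
move=> C0; rewrite /hyp_term !poch_Sr factS natrM exprS.
have h1 : pochhammer C n != 0 by rewrite gt_eqF // poch_gt0.
have h2 : n`!%:R != 0 :> R by rewrite pnatr_eq0 -lt0n fact_gt0.
have h3 : C + n%:R != 0 by rewrite gt_eqF // ltr_wpDr.
have h4 : 1 + n%:R != 0 :> R by rewrite addrC natr1 pnatr_eq0.
by field; rewrite h1 h2 h3 h4.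
Qed.

Lemma cvg_hyp A B C t : 0 < C -> `|t| < 1 -> cvgn (series (hyp_term A B C t)).
Proof.
move=> C0 t1.
pose e : R := `|t|.
have e0 : 0 <= e by rewrite normr_ge0.
have e1 : e < 1 by [].
pose r : R := (1 + e) / 2.
have r2 : r * 2 = 1 + e by rewrite /r divfK // pnatr_eq0.
clearbody r.
have r0 : 0 < r by lra.
have r1 : r < 1 by lra.
have re : 0 < r - e by lra.
pose g : R := `|A| + `|B| + 1.
have g1 : 1 <= g by rewrite /g; have := normr_ge0 A; have := normr_ge0 B; lra.
pose D : R := 2 * g + g ^+ 2.
have D0 : 0 <= D by rewrite /D; nra.
have x0 : 0 <= e * D / (r - e) by rewrite divr_ge0 ?mulr_ge0 // ltW.
have hN := archi_boundP x0.
set N := Num.bound _ in hN.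
apply: (@ratio_test _ r N.+1 r0 r1) => n Nn.
rewrite hyp_term_S // normrM mulrC; apply: ler_wpM2r; first exact: normr_ge0.
pose nn : R := n%:R.
have nn1 : N%:R + 1 <= nn by rewrite /nn natr1 ler_nat.
have Cn : 0 < C + nn by rewrite /nn ltr_wpDr.
have n1 : 0 < n.+1%:R :> R by rewrite ltr0n.
have -> : n.+1%:R = nn + 1 :> R by rewrite /nn natr1.
have nn0 : 0 <= N%:R :> R by rewrite ler0n.
have dp : 0 < (C + nn) * (nn + 1) by apply: mulr_gt0 => //; lra.
rewrite normrM normfV (gtr0_norm dp) ler_pdivrMr //.
rewrite !normrM -/e.
have hA : `|A + nn| <= g + nn.
  apply: (le_trans (ler_normD _ _)); rewrite /nn normr_nat /g.
  have := normr_ge0 B; lra.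
have hB : `|B + nn| <= g + nn.
  apply: (le_trans (ler_normD _ _)); rewrite /nn normr_nat /g.
  have := normr_ge0 A; lra.
have s1 : `|A + nn| * `|B + nn| * e <= (g + nn) * (g + nn) * e.
  apply: ler_wpM2r => //; apply: ler_pM => //; exact: normr_ge0.
apply: (le_trans s1).
have hx : e * D <= (r - e) * nn.
  rewrite -ler_pdivrMl // mulrC; apply: ltW; apply: (lt_le_trans hN); lra.
have hx2 : e * D * nn <= (r - e) * nn * nn.
  apply: ler_wpM2r => //; lra.
have hx3 : e * g ^+ 2 <= e * g ^+ 2 * nn.
  rewrite -{1}[e * g ^+ 2]mulr1; apply: ler_wpM2l; first by nra.
  lra.
have hx4 : r * (nn * nn) <= r * ((C + nn) * (nn + 1)).
  apply: ler_wpM2l; first lra.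
  apply: ler_pM; lra.
apply: (le_trans _ hx4).
move: hx2 hx3; rewrite /D; nra.
Qed.

Definition shift1 (g : R^nat) : R^nat := fun n => if n is k.+1 then g k else 0.

Lemma series_shift1 (g : R^nat) n : series (shift1 g) n.+1 = series g n.
Proof.
by rewrite /series /= big_nat_recl //= add0r.
Qed.

Lemma cvg_shift1 (g : R^nat) (l : R) : (series g @ \oo --> l)%classic ->
  (series (shift1 g) @ \oo --> l)%classic.
Proof.
move=> cg; rewrite -cvg_shiftS.
have -> : [sequence series (shift1 g) n.+1]_n = series g.
  by apply/funext => n /=; rewrite series_shift1.
exact: cg.
Qed.

Definition Fh A B C t := limn (series (hyp_term A B C t)).

Lemma cvg_seriesZ' (k : R) (u : R^nat) (l : R) :
  (series u @ \oo --> l)%classic -> (series (fun n => k * u n) @ \oo --> k * l)%classic.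
Proof.
move=> h.
have -> : series (fun n => k * u n) = (fun n => k * series u n).
  by apply/funext => n; rewrite /series /= mulr_sumr.
exact: cvgMl_tmp.
Qed.

Lemma cvg_seriesD' (u v : R^nat) (l1 l2 : R) :
  (series u @ \oo --> l1)%classic -> (series v @ \oo --> l2)%classic ->
  (series (fun n => u n + v n) @ \oo --> l1 + l2)%classic.
Proof.
move=> h1 h2.
have -> : series (fun n => u n + v n) = (series u + series v).
  by apply/funext => n; rewrite /series /= big_split.
exact: cvgD.
Qed.

Lemma raiseA_term A B C t n : 0 < C ->
  hyp_term A B C t n = hyp_term (A + 1) B C t n +
     shift1 (fun k => (- t) * hyp_term (A + 1) B C t k + ((C - B) / C * t) * hyp_term (A + 1) B (C + 1) t k) n.
Proof.
move=> C0; case: n => [|k].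
  by rewrite /= addr0 /hyp_term /pochhammer !big_ord0.
rewrite /= /hyp_term (poch_Sl A) (poch_Sr (A + 1)) (poch_Sr B) (poch_Sr C).
have hC : pochhammer (C + 1) k = pochhammer C k * (C + k%:R) / C.
  by rewrite -poch_Sr poch_Sl mulrAC mulfV ?mul1r // gt_eqF.
rewrite hC factS natrM exprS.
have h1 : pochhammer C k != 0 by rewrite gt_eqF // poch_gt0.
have h2 : k`!%:R != 0 :> R by rewrite pnatr_eq0 -lt0n fact_gt0.
have h3 : C + k%:R != 0 by rewrite gt_eqF // ltr_wpDr.
have h4 : 1 + k%:R != 0 :> R by rewrite addrC natr1 pnatr_eq0.
have h5 : C != 0 by rewrite gt_eqF.
by field; rewrite h1 h2 h3 h4 h5.
Qed.

Lemma raiseA A B C t : 0 < C -> `|t| < 1 ->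
  Fh A B C t = (1 - t) * Fh (A + 1) B C t + (C - B) / C * t * Fh (A + 1) B (C + 1) t.
Proof.
move=> C0 t1.
have C1 : 0 < C + 1 by rewrite addr_gt0.
have c1 : cvgn (series (hyp_term (A + 1) B C t)) := cvg_hyp C0 t1.
have c2 : cvgn (series (hyp_term (A + 1) B (C + 1) t)) := cvg_hyp C1 t1.
have cg := cvg_seriesD' (cvg_seriesZ' (k := - t) c1) (cvg_seriesZ' (k := (C - B) / C * t) c2).
have cs := cvg_shift1 cg.
have := cvg_seriesD' c1 cs.
have -> : (fun n => hyp_term (A + 1) B C t n + shift1 (fun n0 => - t * hyp_term (A + 1) B C t n0 +
           (C - B) / C * t * hyp_term (A + 1) B (C + 1) t n0) n) = hyp_term A B C t.
  by apply/funext => n; rewrite [RHS]raiseA_term.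
move=> H; rewrite /Fh (cvg_lim _ H) //; ring.
Qed.


Lemma Fh_sym A B C t : Fh A B C t = Fh B A C t.
Proof. by rewrite /Fh hyp_term_sym. Qed.

Lemma pos_base A B C t : 0 <= A -> 0 <= B -> 0 < C -> 0 <= t -> t < 1 ->
  0 < Fh A B C t.
Proof.
move=> A0 B0 C0 t0 t1.
have t1' : `|t| < 1 by rewrite ger0_norm.
have u0 : forall n, 0 <= hyp_term A B C t n.
  move=> n; rewrite /hyp_term; apply: mulr_ge0; last exact: exprn_ge0.
  apply: divr_ge0; first by apply: mulr_ge0; apply: poch_ge0.
  by apply: mulr_ge0; [apply: ltW; apply: poch_gt0 | apply: ler0n].
have nd : nondecreasing_seq (series (hyp_term A B C t)).
  by apply/nondecreasing_seqP => n; rewrite seriesSr lerDl u0.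
have := nondecreasing_cvgn_le nd (cvg_hyp C0 t1') 1.
rewrite /series /= big_nat1 /hyp_term /pochhammer !big_ord0 /= => h.
rewrite /Fh; apply: lt_le_trans h.
by rewrite expr0 !mul1r mulr1 invr_gt0 ltr01.
Qed.

Lemma pos_P1 n : forall A B C t, -(n%:R) <= A -> 0 <= B -> 0 < C ->
  (A < 0 -> B <= C) -> 0 <= t -> t < 1 -> 0 < Fh A B C t.
Proof.
elim: n => [|n IH] A B C t An B0 C0 hAB t0 t1.
  by apply: pos_base => //; move: An; rewrite oppr0.
case: (lerP 0 A) => A0; first exact: pos_base.
have t1' : `|t| < 1 by rewrite ger0_norm.
have BC := hAB A0.
have An' : -(n%:R) <= A + 1 by move: An; rewrite -natr1; lra.
rewrite raiseA //.
have F1 : 0 < Fh (A + 1) B C t by apply: IH => // _; lra.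
have F2 : 0 < Fh (A + 1) B (C + 1) t.
  by apply: IH => //; [rewrite addr_gt0 | move=> _; lra].
have k0 : 0 <= (C - B) / C by apply: divr_ge0; lra.
have p1 : 0 < (1 - t) * Fh (A + 1) B C t by apply: mulr_gt0 => //; lra.
have p2 : 0 <= (C - B) / C * t * Fh (A + 1) B (C + 1) t.
  by apply: mulr_ge0; [apply: mulr_ge0 | apply: ltW].
lra.
Qed.

Lemma pos_P2 n : forall m A B C t, -(n%:R) <= B -> -(m%:R) <= A -> 1 <= C ->
  (A < 0 -> B <= C) -> (B < 0 -> A <= C) -> 0 <= t -> t < 1 -> 0 < Fh A B C t.
Proof.
elim: n => [|n IH] m A B C t Bn Am C1 hAB hBA t0 t1.
  by apply: (@pos_P1 m) => //; [move: Bn; rewrite oppr0 | lra].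
case: (lerP 0 B) => B0.
  by apply: (@pos_P1 m) => //; lra.
have t1' : `|t| < 1 by rewrite ger0_norm.
have AC := hBA B0.
have Bn' : -(n%:R) <= B + 1 by move: Bn; rewrite -natr1; lra.
rewrite Fh_sym raiseA; last by []; last by lra.
rewrite -!(Fh_sym A).
have F1 : 0 < Fh A (B + 1) C t by apply: (IH m) => // _; lra.
have F2 : 0 < Fh A (B + 1) (C + 1) t by apply: (IH m) => //; try lra; move=> _; lra.
have k0 : 0 <= (C - A) / C by apply: divr_ge0; lra.
have p1 : 0 < (1 - t) * Fh A (B + 1) C t by apply: mulr_gt0 => //; lra.
have p2 : 0 <= (C - A) / C * t * Fh A (B + 1) (C + 1) t.
  by apply: mulr_ge0; [apply: mulr_ge0 | apply: ltW].
lra.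
Qed.

Lemma nat_lb (x : R) : exists n : nat, -(n%:R) <= x.
Proof.
have h := archi_boundP (normr_ge0 x).
exists (Num.bound `|x|); have := ler_norm (- x); rewrite normrN; lra.
Qed.

Lemma G_pos a b c t : 0 < c -> 0 < a * b -> 0 <= t -> t < 1 ->
  0 < Fh (a + 1) (b + 1) (c + 1) t.
Proof.
move=> c0 ab t0 t1.
have [m hm] := nat_lb (a + 1).
have [n hn] := nat_lb (b + 1).
apply: (@pos_P2 n m) => //; first lra.
- move=> a1; have an : a < 0 by lra.
  have bn : b < 0 by nra.
  lra.
- move=> b1; have bn : b < 0 by lra.
  have an : a < 0 by nra.
  lra.
Qed.

Lemma diffs_coef k A B C : 0 < C ->
  pseries_diffs (fun n => k * coef A B C n) =
  (fun n => (k * (A * B / C)) * coef (A + 1) (B + 1) (C + 1) n).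
Proof.
move=> C0; apply/funext => n.
rewrite /pseries_diffs /coef !poch_Sl factS natrM.
have h1 : pochhammer (C + 1) n != 0 by rewrite gt_eqF // poch_gt0 // addr_gt0.
have h2 : n`!%:R != 0 :> R by rewrite pnatr_eq0 -lt0n fact_gt0.
have h4 : 1 + n%:R != 0 :> R by rewrite addrC natr1 pnatr_eq0.
have h4' : n.+1%:R != 0 :> R by rewrite pnatr_eq0.
have h5 : C != 0 by rewrite gt_eqF.
by field; rewrite h1 h2 h4 h5.
Qed.

Lemma pseries_scaled k A B C x : 0 < C -> `|x| < 1 ->
  (pseries (fun n => k * coef A B C n) x @ \oo --> k * Fh A B C x)%classic.
Proof.
move=> C0 x1.
have c1 : cvgn (series (hyp_term A B C x)) := cvg_hyp C0 x1.
have := cvg_seriesZ' (k := k) c1.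
have -> : pseries (fun n => k * coef A B C n) x = series (fun n => k * hyp_term A B C x n).
  apply/funext => n; rewrite /pseries /series /=.
  by apply: eq_bigr => i _; rewrite hyp_termE mulrA.
by [].
Qed.

End S.

Unset Implicit Arguments.

Theorem corollary4p6 (R : realType) (a b c : R) (hc : 0 < c) (hab : 0 < a * b) :
  forall x y : R, 0 <= x -> x < y -> y < 1 ->
    hyp2F1 a b c x - 1 < hyp2F1 a b c y - 1.
Proof.
move=> x y x0 xy y1.
rewrite ltrD2r.
pose f := fun z : R => limn (pseries (fun n => 1 * coef a b c n) z).
have hf : forall z, hyp2F1 a b c z = f z.
  move=> z; rewrite /hyp2F1 /f.
  have -> : series (hyp_term a b c z) = pseries (fun n => 1 * coef a b c n) z.
    apply/funext => n; rewrite /pseries /series /=.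
    by apply: eq_bigr => i _; rewrite hyp_termE mul1r.
  by [].
rewrite !hf.
pose K : R := (1 + y) / 2.
have K2 : K * 2 = 1 + y by rewrite /K divfK // pnatr_eq0.
clearbody K.
have yK : y < K by lra.
have K1 : K < 1 by lra.
have K0 : 0 < K by lra.
have K1' : `|K| < 1 by rewrite gtr0_norm.
have c1 : 0 < c + 1 by rewrite addr_gt0.
have c2 : 0 < c + 1 + 1 by rewrite !addr_gt0.
have D : forall t, 0 <= t -> t <= y ->
    is_derive t 1 f (1 * (a * b / c) * Fh (a + 1) (b + 1) (c + 1) t).
  move=> t t0 ty.
  have t1' : `|t| < 1 by rewrite ger0_norm //; lra.
  have tK : `|t| < `|K| by rewrite ger0_norm // gtr0_norm //; lra.
  have ck : cvgn (pseries (fun n => 1 * coef a b c n) K) := cvgP _ (pseries_scaled (k := 1) (A := a) (B := b) hc K1').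
  have cd : cvgn (pseries (pseries_diffs (fun n => 1 * coef a b c n)) K).
    rewrite diffs_coef //; exact: (cvgP _ (pseries_scaled c1 K1')).
  have cdd : cvgn (pseries (pseries_diffs (pseries_diffs (fun n => 1 * coef a b c n))) K).
    rewrite diffs_coef // diffs_coef //; exact: (cvgP _ (pseries_scaled c2 K1')).
  have := pseries_snd_diffs ck cd cdd tK.
  by rewrite diffs_coef // (cvg_lim _ (pseries_scaled (k := 1 * (a * b / c)) (A := a + 1) (B := b + 1) c1 t1')).
have Fpos : forall t, 0 <= t -> t < 1 -> 0 < 1 * (a * b / c) * Fh (a + 1) (b + 1) (c + 1) t.
  move=> t t0 t1; rewrite mul1r; apply: mulr_gt0; first exact: divr_gt0.
  exact: G_pos.
apply: (@gtr0_derive1_incr R f x y) => //.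
- move=> z; rewrite in_itv /= => /andP[xz zy].
  by have [Hd _] := D z (ltW (le_lt_trans x0 xz)) (ltW zy).
- move=> z; rewrite in_itv /= => /andP[xz zy].
  have [_ Hv] := D z (ltW (le_lt_trans x0 xz)) (ltW zy).
  rewrite derive1E Hv; apply: Fpos; lra.
- apply: derivable_within_continuous => z; rewrite in_itv /= => /andP[xz zy].
  by have [Hd _] := D z (le_trans x0 xz) zy.
Qed.
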